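(* Let $M$ be an $n\times n$ complex Hadamard matrix. Let $\Gamma$ be the group of all $n\times n$ complex monomial matrices $P$ with $PMP^\ast=M$, let $\pi\colon\Gamma\to\mathrm{Sym}_n$ send a monomial matrix to its underlying permutation, let $G=\pi(\Gamma)$, and assume $G$ is transitive. Let $\Gamma_{\rm f}=\{L\in\Gamma : \det(L)=1\}$. Then the restriction of $\pi$ to $\Gamma_{\rm f}$ is a surjection $\Gamma_{\rm f}\to G$ whose kernel is the cyclic central subgroup $\langle\zeta_nI_n\rangle$, where $\zeta_n$ is a primitive complex $n$-th root of unity; in particular $|\Gamma_{\rm f}|=n|G|$ is finite. Moreover, $M\in\mathrm{C}(\Gamma)$ and $\mathrm{C}(\Gamma)=\mathrm{C}(\Gamma_{\rm f})$.
   Context: A complex Hadamard matrix of order $n$ has all entries of norm $1$ and satisfies $MM^\ast=nI_n$. A monomial matrix has exactly one nonzero entry in each row and column; it factors as $PD$ with $P$ a permutation matrix and $D$ diagonal, and $\pi$ maps it to $P$. For a matrix group $K$, $\mathrm{C}(K)$ denotes the set of matrices commuting with every element of $K$. ($\Gamma$ is the projection onto the first coordinate of the strong automorphism group $\{(P,P) : PMP^\ast=M\}$ of $M$.) *)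

(* Defs.v *)
(* Complex numbers: an arbitrary numClosedFieldType C
   (algebraically closed field with conjugation and norm; C = complex numbers). *)
From mathcomp Require Import all_boot all_order all_algebra all_fingroup.
Set Implicit Arguments. Unset Strict Implicit. Unset Printing Implicit Defensive.
Import Order.TTheory GRing.Theory Num.Theory.
Local Open Scope ring_scope.

Section Defs.
Variables (C : numClosedFieldType) (n : nat).

Definition ctrmx (A : 'M[C]_n) : 'M[C]_n := (map_mx Num.conj A)^T.

Definition hadamard (M : 'M[C]_n) : Prop :=
  (forall i j, `|M i j| = 1) /\ M *m ctrmx M = (n%:R)%:M.

Definition monomial (P : 'M[C]_n) : Prop :=
  (forall i, #|[set j | P i j != 0]| = 1%N) /\
  (forall j, #|[set i | P i j != 0]| = 1%N).

(* pi(L) = s : L = perm_mx s *m D with D diagonal invertible,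
   i.e. L i j is nonzero exactly when s i = j *)
Definition underlying_perm (L : 'M[C]_n) (s : 'S_n) : Prop :=
  forall i j, (L i j != 0) = (s i == j).

Definition in_Gamma (M L : 'M[C]_n) : Prop :=
  monomial L /\ L *m M *m ctrmx L = M.

Definition in_Gammaf (M L : 'M[C]_n) : Prop :=
  in_Gamma M L /\ \det L = 1.

Definition in_centralizer (K : 'M[C]_n -> Prop) (X : 'M[C]_n) : Prop :=
  forall L, K L -> L *m X = X *m L.

End Defs.

(* Main.v *)
Require Import Defs.
From mathcomp Require Import all_boot all_order all_algebra all_fingroup all_solvable all_field.
From Stdlib Require Import ClassicalEpsilon.
Import Order.TTheory GRing.Theory Num.Theory.
Local Open Scope ring_scope.
Set Implicit Arguments. Unset Strict Implicit.
Lemma prim_root_ex (C : numClosedFieldType) (n : nat) :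
  (n > 0)%N -> exists z : C, n.-primitive_root z.
Proof.
pose p : {poly C} := 'X^n - 1; have [r Dp] := closed_field_poly_normal p.
move=> n_gt0; rewrite (monicP _) ?monicXnsubC // scale1r in Dp.
have rn1: all n.-unity_root r by apply/allP=> z; rewrite -root_prod_XsubC -Dp.
have sz_r: (n < (size r).+1)%N.
  by rewrite -(size_prod_XsubC r id) -Dp size_XnsubC.
have [|z] := hasP (has_prim_root n_gt0 rn1 _ sz_r); last by exists z.
by rewrite -separable_prod_XsubC -Dp separable_Xn_sub_1 // pnatr_eq0 -lt0n.
Qed.

Lemma ctr_mxE (C : numClosedFieldType) (n : nat) (A : 'M[C]_n) i j :
  ctrmx A i j = (A j i)^*.
Proof. by rewrite /ctrmx !mxE. Qed.

Lemma ctrmxM (C : numClosedFieldType) (n : nat) (A B : 'M[C]_n) :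
  ctrmx (A *m B) = ctrmx B *m ctrmx A.
Proof.
apply/matrixP => i j; rewrite ctr_mxE !mxE rmorph_sum; apply: eq_bigr => k _.
by rewrite !ctr_mxE rmorphM mulrC.
Qed.

Lemma ctrmxZ (C : numClosedFieldType) (n : nat) (a : C) (A : 'M[C]_n) :
  ctrmx (a *: A) = a^* *: ctrmx A.
Proof. by apply/matrixP => i j; rewrite ctr_mxE [in RHS]mxE ctr_mxE mxE rmorphM. Qed.

Lemma ctrmx1 (C : numClosedFieldType) (n : nat) :
  ctrmx (1%:M : 'M[C]_n) = 1%:M.
Proof. by apply/matrixP => i j; rewrite ctr_mxE !mxE eq_sym; case: (i == j); rewrite /= ?rmorph1 ?rmorph0. Qed.

Lemma ctrmxK (C : numClosedFieldType) (n : nat) (A : 'M[C]_n) :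
  ctrmx (ctrmx A) = A.
Proof. by apply/matrixP => i j; rewrite !ctr_mxE conjCK. Qed.

Lemma det_ctrmx (C : numClosedFieldType) (n : nat) (A : 'M[C]_n) :
  \det (ctrmx A) = (\det A)^*.
Proof. by rewrite /ctrmx det_tr det_map_mx. Qed.

Lemma mul_row1 (C : numClosedFieldType) (n : nat) (L A : 'M[C]_n) i j c :
  (forall k, k != c -> L i k = 0) -> (L *m A) i j = L i c * A c j.
Proof.
move=> H; rewrite mxE (bigD1 c) //= big1 ?addr0 // => k /H ->; exact: mul0r.
Qed.

Lemma mul_ctr1 (C : numClosedFieldType) (n : nat) (L A : 'M[C]_n) i j c :
  (forall k, k != c -> L j k = 0) -> (A *m ctrmx L) i j = A i c * (L j c)^*.
Proof.
move=> H; rewrite mxE (bigD1 c) //= big1 ?addr0 ?ctr_mxE // => k /H Hk.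
by rewrite ctr_mxE Hk rmorph0 mulr0.
Qed.

Lemma rowsupp (C : numClosedFieldType) (n : nat) (L : 'M[C]_n) :
  monomial L -> forall i, exists c, forall k, (L i k != 0) = (k == c).
Proof.
case=> H _ i; have /eqP/cards1P [c Hc] := H i; exists c => k.
by have := congr1 (fun A : {set 'I_n} => k \in A) Hc; rewrite !inE.
Qed.

Lemma colsupp (C : numClosedFieldType) (n : nat) (L : 'M[C]_n) :
  monomial L -> forall j, exists c, forall k, (L k j != 0) = (k == c).
Proof.
case=> _ H j; have /eqP/cards1P [c Hc] := H j; exists c => k.
by have := congr1 (fun A : {set 'I_n} => k \in A) Hc; rewrite !inE.
Qed.

Lemma supp0 (C : numClosedFieldType) (n : nat) (L : 'M[C]_n) i c :
  (forall k, (L i k != 0) = (k == c)) -> forall k, k != c -> L i k = 0.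
Proof. by move=> H k; rewrite -H => /negPn/eqP. Qed.
Lemma hadamard_nz (C : numClosedFieldType) (n : nat) (M : 'M[C]_n) i j :
  hadamard M -> M i j != 0.
Proof. by case=> H _; rewrite -normr_eq0 H oner_eq0. Qed.

Lemma unitary_l (C : numClosedFieldType) (n : nat) (M L : 'M[C]_n) :
  hadamard M -> in_Gamma M L -> L *m ctrmx L = 1%:M.
Proof.
move=> hM [mL HL]; apply/matrixP => i j; rewrite [RHS]mxE.
have [cj Hcj] := rowsupp mL j.
rewrite (mul_ctr1 _ _ (supp0 Hcj)).
have [->|nij] := eqVneq i j.
  idtac.
  have := congr1 (fun A : 'M[C]_n => A j j) HL.
  rewrite (mul_ctr1 _ _ (supp0 Hcj)) (mul_row1 _ _ (supp0 Hcj)).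
  rewrite -mulrA [M cj cj * _]mulrC mulrA => E.
  have := congr1 (fun x => `|x|) E; rewrite normrM.
  case: hM => hn _; rewrite !hn mulr1 -normCK normrX normr_id.
  by move=> ->.
idtac.
have Lj : L j cj != 0 by rewrite Hcj.
have [r Hr] := colsupp mL cj.
have : L i cj == 0.
  apply/negP => /negPn; rewrite Hr => /eqP ei.
  by move: Lj; rewrite Hr => /eqP ej; move: nij; rewrite ei ej eqxx.
by move/eqP ->; rewrite mul0r.
Qed.

Lemma unitary_r (C : numClosedFieldType) (n : nat) (M L : 'M[C]_n) :
  hadamard M -> in_Gamma M L -> ctrmx L *m L = 1%:M.
Proof. by move=> hM hL; apply: mulmx1C; apply: unitary_l hM hL. Qed.

Lemma gamma_comm (C : numClosedFieldType) (n : nat) (M L : 'M[C]_n) :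
  hadamard M -> in_Gamma M L -> L *m M = M *m L.
Proof.
move=> hM hL; have U := unitary_r hM hL.
case: hL => _ HL.
by rewrite -{2}HL -!mulmxA U mulmx1.
Qed.

Lemma unit_ccl (C : numClosedFieldType) (t : C) : t * t^* = 1 -> t != 0.
Proof. by move=> H; apply/eqP => t0; move: H; rewrite t0 mul0r => /eqP; rewrite eq_sym oner_eq0. Qed.

Lemma scale_Gamma (C : numClosedFieldType) (n : nat) (M L : 'M[C]_n) t :
  in_Gamma M L -> t * t^* = 1 -> in_Gamma M (t *: L).
Proof.
move=> [[r c] HL] ht; have tn := unit_ccl ht.
have E : forall i j, ((t *: L) i j != 0) = (L i j != 0).
  by move=> i j; rewrite mxE mulf_eq0 (negbTE tn).
split; first split.
- move=> i; rewrite -(r i); apply: eq_card => j; by rewrite !inE E.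
- move=> j; rewrite -(c j); apply: eq_card => i; by rewrite !inE E.
by rewrite ctrmxZ -!scalemxAl scalemxAr scalerA ht scale1r HL.
Qed.

Lemma scale_perm (C : numClosedFieldType) (n : nat) (L : 'M[C]_n) t s :
  t != 0 -> underlying_perm L s -> underlying_perm (t *: L) s.
Proof. by move=> tn H i j; rewrite mxE mulf_eq0 (negbTE tn) H. Qed.

Lemma unit_root_cc (C : numClosedFieldType) (n : nat) (t : C) :
  (0 < n)%N -> t ^+ n = 1 -> t * t^* = 1.
Proof.
move=> n0 H; rewrite -normCK.
have : `|t| ^+ n == 1 by rewrite -normrX H normr1.
by rewrite pexpr_eq1 // => /eqP ->; rewrite expr1n.
Qed.

Lemma scale_Gammaf (C : numClosedFieldType) (n : nat) (M L : 'M[C]_n) t :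
  (0 < n)%N -> in_Gammaf M L -> t ^+ n = 1 -> in_Gammaf M (t *: L).
Proof.
move=> n0 [hL dL] ht; split; first exact: scale_Gamma hL (unit_root_cc n0 ht).
by rewrite detZ ht dL mulr1.
Qed.

Lemma monomial_perm (C : numClosedFieldType) (n : nat) (L : 'M[C]_n) :
  monomial L -> exists s, underlying_perm L s.
Proof.
move=> mL.
pose f i := odflt i [pick j | L i j != 0].
have fspec : forall i k, (L i k != 0) = (k == f i).
  move=> i k; have [c Hc] := rowsupp mL i; rewrite /f.
  case: pickP => [j Hj|none] /=; first by move: Hj; rewrite Hc => /eqP ->.
  by have := none c; rewrite Hc eqxx.
have finj : injective f.
  move=> i1 i2 e.
  have h1 : L i1 (f i1) != 0 by rewrite fspec.
  have h2 : L i2 (f i1) != 0 by rewrite fspec e.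
  have [r Hr] := colsupp mL (f i1).
  by move: h1 h2; rewrite !Hr => /eqP -> /eqP ->.
exists (perm finj) => i j; by rewrite permE fspec eq_sym.
Qed.

Lemma detL_cc (C : numClosedFieldType) (n : nat) (M L : 'M[C]_n) :
  hadamard M -> in_Gamma M L -> \det L * (\det L)^* = 1.
Proof.
move=> hM hL; have := congr1 determinant (unitary_l hM hL).
by rewrite det_mulmx det_ctrmx det1.
Qed.

Lemma to_Gammaf (C : numClosedFieldType) (n : nat) (M L : 'M[C]_n) :
  (0 < n)%N -> hadamard M -> in_Gamma M L ->
  exists2 mu, mu * mu^* = 1 & in_Gammaf M (mu *: L).
Proof.
move=> n0 hM hL; have dcc := detL_cc hM hL; have dn := unit_ccl dcc.
pose mu := n.-root ((\det L)^-1).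
have mun : mu ^+ n = (\det L)^-1 by rewrite /mu rootCK.
have mucc : mu * mu^* = 1.
  rewrite -normCK.
  have : `|mu| ^+ n == 1.
    rewrite -normrX mun normfV.
    have : `|\det L| ^+ 2 == 1 by rewrite normCK dcc.
    by rewrite pexpr_eq1 // => /eqP ->; rewrite invr1.
  by rewrite pexpr_eq1 // => /eqP ->; rewrite expr1n.
exists mu => //; split; first exact: scale_Gamma.
by rewrite detZ mun mulVf.
Qed.

Lemma diag_scalar (C : numClosedFieldType) (n : nat) (M K : 'M[C]_n) i0 :
  hadamard M -> K *m M *m ctrmx K = M ->
  (forall i j, i != j -> K i j = 0) -> K = K i0 i0 *: 1%:M.
Proof.
move=> hM HK dK.
have sup : forall i k, k != i -> K i k = 0 by move=> i k; rewrite eq_sym; apply: dK.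
have E : forall i j, K i i * (K j j)^* = 1.
  move=> i j; have := congr1 (fun A : 'M[C]_n => A i j) HK.
  rewrite (mul_ctr1 _ _ (sup j)) (mul_row1 _ _ (sup i)).
  rewrite -mulrA [M i j * _]mulrC mulrA => e.
  by apply: (mulIf (hadamard_nz i j hM)); rewrite mul1r.
apply/matrixP => i j; rewrite !mxE.
have [<-|nij] := eqVneq i j; last by rewrite dK // mulr0.
have cz : (K i i)^* != 0 by rewrite conjC_eq0 (unit_ccl (E i i)).
by rewrite mulr1; apply: (mulIf cz); rewrite E E.
Qed.

Lemma fiber (C : numClosedFieldType) (n : nat) (M L1 L2 : 'M[C]_n) (s : 'S_n) (i0 : 'I_n) :
  hadamard M -> in_Gammaf M L1 -> in_Gammaf M L2 ->
  underlying_perm L1 s -> underlying_perm L2 s ->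
  exists2 d, d ^+ n = 1 & L2 = d *: L1.
Proof.
move=> hM [g1 d1] [g2 d2] p1 p2.
pose K := L2 *m ctrmx L1.
have supL : forall (L : 'M[C]_n), underlying_perm L s ->
    forall i k, k != s i -> L i k = 0.
  by move=> L pL i k; rewrite eq_sym -pL => /negPn/eqP.
have dK : forall i j, i != j -> K i j = 0.
  move=> i j nij; rewrite /K (mul_ctr1 _ _ (supL _ p1 j)).
  have -> : L2 i (s j) = 0.
    by apply: (supL _ p2); rewrite (inj_eq perm_inj) eq_sym.
  by rewrite mul0r.
have U1 := unitary_r hM g1.
have HK : K *m M *m ctrmx K = M.
  rewrite /K ctrmxM ctrmxK.
  have e1 : ctrmx L1 *m M *m L1 = M.
    by rewrite -mulmxA -(gamma_comm hM g1) mulmxA U1 mul1mx.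
  case: g2 => _ H2.
  by rewrite -!mulmxA (mulmxA (ctrmx L1)) (mulmxA _ L1) e1 mulmxA.
have KE := diag_scalar i0 hM HK dK.
exists (K i0 i0).
  have := congr1 determinant KE.
  by rewrite detZ det1 mulr1 /K det_mulmx det_ctrmx d1 d2 rmorph1 mulr1 => <-.
have E2 : L2 = K *m L1 by rewrite /K -mulmxA U1 mulmx1.
by rewrite {1}E2 {1}KE -scalemxAl mul1mx.
Qed.

Lemma one_Gammaf (C : numClosedFieldType) (n : nat) (M : 'M[C]_n) :
  in_Gammaf M 1%:M /\ underlying_perm (1%:M : 'M[C]_n) 1%g.
Proof.
have up : underlying_perm (1%:M : 'M[C]_n) 1%g.
  by move=> i j; rewrite perm1 mxE; case: (i == j); rewrite /= ?oner_eq0 ?eqxx.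
split=> //; split; last exact: det1.
split; last by rewrite ctrmx1 mul1mx mulmx1.
split=> [i|j].
  rewrite -(cards1 i); apply: eq_card => j; by rewrite !inE up perm1 eq_sym.
rewrite -(cards1 j); apply: eq_card => i; by rewrite !inE up perm1.
Qed.

Unset Implicit Arguments.
Theorem proposition6p1 (C : numClosedFieldType) (n : nat) (M : 'M[C]_n)
    (G : {set 'S_n}) :
  (0 < n)%N ->
  hadamard M ->
  (* G = pi(Gamma) *)
  (forall s : 'S_n, s \in G <-> exists2 L, in_Gamma M L & underlying_perm L s) ->
  [transitive G, on [set: 'I_n] | 'P] ->
  [/\ (* pi restricted to Gamma_f is onto G *)
      (forall s, s \in G -> exists2 L, in_Gammaf M L & underlying_perm L s),
      (* its kernel is <zeta_n I_n> *)
      (forall zeta : C, n.-primitive_root zeta ->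
         forall L : 'M[C]_n,
           (in_Gammaf M L /\ underlying_perm L 1%g) <->
           exists2 k : nat, (k < n)%N & L = zeta ^+ k *: 1%:M),
      (* |Gamma_f| = n |G|, finite *)
      (exists s : seq 'M[C]_n,
         [/\ uniq s, (forall L, L \in s <-> in_Gammaf M L) & size s = (n * #|G|)%N]),
      (* M in C(Gamma) *)
      in_centralizer (in_Gamma M) M
    & (* C(Gamma) = C(Gamma_f) *)
      (forall X : 'M[C]_n,
         in_centralizer (in_Gamma M) X <-> in_centralizer (in_Gammaf M) X)].
Proof.
move=> n0 hM HG _.
pose i0 : 'I_n := Ordinal n0.
have surj : forall s, s \in G -> exists2 L, in_Gammaf M L & underlying_perm L s.
  move=> s /HG [L hL pL]; have [mu mucc hf] := to_Gammaf n0 hM hL.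
  by exists (mu *: L) => //; apply: scale_perm (unit_ccl mucc) pL.
have ker : forall zeta : C, n.-primitive_root zeta ->
         forall L : 'M[C]_n,
           (in_Gammaf M L /\ underlying_perm L 1%g) <->
           exists2 k : nat, (k < n)%N & L = zeta ^+ k *: 1%:M.
  move=> z pz L; have [g1 p1] := one_Gammaf M; split.
    case=> gL pL; have [d dn ->] := fiber i0 hM g1 gL p1 pL.
    have [k ->] := prim_rootP pz dn; by exists k.
  case=> k _ ->.
  have zk : (z ^+ k) ^+ n = 1 by rewrite exprAC (prim_expr_order pz) expr1n.
  split; first exact: scale_Gammaf.
  apply: scale_perm p1; apply: unit_ccl; exact: unit_root_cc zk.
split=> //.
- have [z pz] := prim_root_ex C n0.
  have ex : forall s : 'S_n, exists L : 'M[C]_n,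
      s \in G -> in_Gammaf M L /\ underlying_perm L s.
    move=> s; case: (boolP (s \in G)) => sG.
      by have [L h1 h2] := surj s sG; exists L.
    by exists 0 => sG'; case/negP: sG.
  pose Lf s := proj1_sig (constructive_indefinite_description _ (ex s)).
  have Lfs : forall s, s \in G -> in_Gammaf M (Lf s) /\ underlying_perm (Lf s) s.
    by move=> s; rewrite /Lf; case: constructive_indefinite_description.
  exists [seq z ^+ k *: Lf s | s <- enum G, k <- iota 0 n]; split.
  + apply: allpairs_uniq; [exact: enum_uniq | exact: iota_uniq |].
    move=> [s k] [t j] /allpairsP [[s' k'] [/= s1 k1 [-> ->]]].
    move=> /allpairsP [[t' j'] [/= t1 j1 [-> ->]]] /= E.
    rewrite mem_enum in s1; rewrite mem_enum in t1.
    have [_ ps] := Lfs s' s1; have [_ pt] := Lfs t' t1.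
    have zn : forall k, z ^+ k != 0.
      by move=> m; rewrite expf_neq0 // (unit_ccl (unit_root_cc n0 (prim_expr_order pz))).
    have ps' := scale_perm (zn k') ps; have pt' := scale_perm (zn j') pt.
    have est : s' = t'.
      apply/permP => i; apply/eqP; rewrite -ps' E pt' //.
    subst t'.
    have a0 : Lf s' i0 (s' i0) != 0 by rewrite ps.
    have := congr1 (fun A : 'M[C]_n => A i0 (s' i0)) E; rewrite !mxE.
    move/(mulIf a0)/eqP; rewrite (eq_prim_root_expr pz).
    rewrite mem_iota in k1; rewrite mem_iota in j1.
    rewrite !modn_small //; by move/eqP->.
  + move=> L; split.
      move/allpairsP => [[s k] /= [s1 _ ->]].
      rewrite mem_enum in s1; have [g _] := Lfs s s1.
      apply: scale_Gammaf => //; by rewrite exprAC (prim_expr_order pz) expr1n.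
    move=> gL; have [s ps] := monomial_perm gL.1.1.
    have sG : s \in G by apply/HG; exists L => //; exact: gL.1.
    have [g1 p1] := Lfs s sG.
    have [d dn ->] := fiber i0 hM g1 gL p1 ps.
    have [k ->] := prim_rootP pz dn.
    apply/allpairsP; exists (s, val k); split => //=.
      by rewrite mem_enum.
    by rewrite mem_iota /= add0n.
  + rewrite size_allpairs size_iota cardE mulnC //.
- by move=> L hL; apply: gamma_comm.
move=> X; split.
  by move=> H L [hL _]; apply: H.
move=> H L hL; have [mu mucc hf] := to_Gammaf n0 hM hL.
have := H _ hf; rewrite -scalemxAl -scalemxAr.
exact: (scalerI (unit_ccl mucc)).
Qed.
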